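(* Assume the setting below (missing at random). Fix $\boldsymbol\delta\in\mathbb R^n$, let $\mathcal S=\{i:M_i=1\}$, $n_{\mathcal S1}=\sum_{i\in\mathcal S}Z_i$ and $n_{\mathcal S0}=|\mathcal S|-n_{\mathcal S1}$. For $\boldsymbol z\in\{0,1\}^n$, $\boldsymbol y\in\overline{\mathbb R}^n$ let $t_{\mathrm R,\phi,\mathcal S}(\boldsymbol z,\boldsymbol y)=t_{\mathrm R,\phi}(\boldsymbol z_{\mathcal S},\boldsymbol y_{\mathcal S})$, the statistic computed on the subvectors indexed by $\mathcal S$ (original index order kept), and let $G_{\mathrm R,\phi,\mathcal S}(c)=\mathbb P(t_{\mathrm R,\phi,\mathcal S}(\boldsymbol A,\boldsymbol y_0)\ge c)$, where $\boldsymbol A_{\mathcal S}$ is uniform over assignments of the units in $\mathcal S$ with exactly $n_{\mathcal S1}$ treated (with $\mathcal S,n_{\mathcal S1}$ held fixed) and $\boldsymbol y_0\in\mathbb R^n$ is any fixed vector. Then $$p_{\boldsymbol Z,\boldsymbol\delta,\mathcal S}=G_{\mathrm R,\phi,\mathcal S}\big(t_{\mathrm R,\phi,\mathcal S}(\boldsymbol Z,\boldsymbol Y-\boldsymbol\delta\circ\boldsymbol Z)\big)$$ (which only uses the observed outcomes $Y_i$, $i\in\mathcal S$) is a valid p-value for $H_{\boldsymbol\delta}:\boldsymbol\tau=\boldsymbol\delta$: if $H_{\boldsymbol\delta}$ holds, $\mathbb P(p_{\boldsymbol Z,\boldsymbol\delta,\mathcal S}\le\alpha)\le\alpha$ for every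 $\alpha\in(0,1)$.
   Context: There are $n$ units with fixed potential outcomes $Y_i^\star(0),Y_i^\star(1)\in\mathbb R$; $\tau_i=Y_i^\star(1)-Y_i^\star(0)$, $\boldsymbol\tau=(\tau_1,\dots,\tau_n)^\intercal$. Missing at random: the potential missingness pairs $(M_i(1),M_i(0))\in\{0,1\}^2$, $1\le i\le n$, are random, i.i.d. across $i$, with $\mathbb P((M_i(1),M_i(0))=(m,m'))=p_{mm'}$ for constants $p_{11},p_{10},p_{01},p_{00}\ge0$ summing to 1 that do not depend on the potential outcomes (conditionally on the potential outcomes). The assignment $\boldsymbol Z\in\{0,1\}^n$ is from a completely randomized experiment: for fixed positive integers $n_1,n_0$ with $n_1+n_0=n$, $\boldsymbol Z$ is uniform over vectors with exactly $n_1$ ones, independently of the potential outcomes and potential missingness indicators. Observed missingness $M_i=Z_iM_i(1)+(1-Z_i)M_i(0)$; the realized outcome $Z_iY_i^\star(1)+(1-Z_i)Y_i^\star(0)$ is observed, and denoted $Y_i$, only when $M_i=1$. $\circ$ is the entrywise product. $\overline{\mathbb R}=\mathbb R\cup\{\pm\infty\}$; $\psi_{i,j}(y,y')=\mathbf 1\{y>y'\}+\mathbf 1\{y=y'\}\mathbf 1\{i\ge j\}$; $\mathrm{rank}_i(\boldsymbol y)=\sum_j\psi_{i,j}(y_i,y_j)$. $\phi$ is a fixed nondecreasing real function on the nonnegative integers. $t_{\mathrm R,\phi}(\boldsymbol z,\boldsymbol y)$ is either $\sum_i z_i\phi(\mathrm{rank}_i(\boldsymbol y))$ or $\sum_i z_i\phi\big(\sum_j(1-z_j)\psi_{i,j}(y_i,y_j)\big)$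 (sums over the units of the given vectors); the result holds for either. *)

(* Defs.v *)
From HB Require Import structures.
From mathcomp Require Import all_boot all_order all_algebra.
From mathcomp Require Import reals.
Set Implicit Arguments. Unset Strict Implicit. Unset Printing Implicit Defensive.
Import Order.TTheory GRing.Theory Num.Theory.
Local Open Scope ring_scope.

Section Defs.
Variables (R : realType) (n : nat).

Definition assignment := {ffun 'I_n -> bool}.
(* Potential missingness pairs (M_i(1), M_i(0)) for each unit. *)
Definition misspairs := {ffun 'I_n -> bool * bool}.

Definition ntreated (z : assignment) : nat := #|[set i | z i]|.

Definition psi (i j : 'I_n) (y y' : R) : nat :=
  (nat_of_bool (y' < y)%R + nat_of_bool ((y == y') && (j <= i)%N))%N.

Inductive stat_kind := RankSum | ControlRank.

(* t_{R,phi,S}(z,y) = t_{R,phi}(z_S, y_S): the statistic computed on the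
   subvectors indexed by S, original index order kept (so the tie-break
   i >= j on positions in the subvector is the same as on original indices). *)
Definition tRS (k : stat_kind) (phi : nat -> R) (S : {set 'I_n})
    (z : assignment) (y : 'I_n -> R) : R :=
  \sum_(i in S | z i)
     phi (match k with
          | RankSum => \sum_(j in S) psi i j (y i) (y j)
          | ControlRank => \sum_(j in S) ((~~ z j : nat) * psi i j (y i) (y j))%N
          end).

(* Assignments of the units of S with exactly m treated
   (units outside S are set to 0, they are irrelevant for tRS). *)
Definition assignS (S : {set 'I_n}) (m : nat) : {set assignment} :=
  [set a : assignment | [forall i, a i ==> (i \in S)] && (ntreated a == m)].

Definition GRS (k : stat_kind) (phi : nat -> R) (S : {set 'I_n}) (m : nat)
    (y0 : 'I_n -> R) (c : R) : R :=
  (#|[set a in assignS S m | c <= tRS k phi S a y0]|)%:R / (#|assignS S m|)%:R.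

Definition obsS (z : assignment) (mm : misspairs) : {set 'I_n} :=
  [set i | if z i then (mm i).1 else (mm i).2].

Definition Yreal (Y1 Y0 : 'I_n -> R) (z : assignment) (i : 'I_n) : R :=
  if z i then Y1 i else Y0 i.

Definition pval (k : stat_kind) (phi : nat -> R) (Y1 Y0 delta y0 : 'I_n -> R)
    (z : assignment) (mm : misspairs) : R :=
  let S := obsS z mm in
  GRS k phi S #|[set i in S | z i]| y0
      (tRS k phi S z (fun i => Yreal Y1 Y0 z i - delta i * (z i)%:R)).

Definition pmiss (p11 p10 p01 p00 : R) (b : bool * bool) : R :=
  match b with
  | (true, true) => p11 | (true, false) => p10
  | (false, true) => p01 | (false, false) => p00
  end.

(* Joint law: Z uniform over assignments with n1 treated, independent of the
   i.i.d. missingness pairs with law pmiss. Probability of an event E. *)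
Definition Pr (n1 : nat) (p11 p10 p01 p00 : R)
    (E : assignment -> misspairs -> bool) : R :=
  \sum_(z : assignment | ntreated z == n1) \sum_(mm : misspairs)
     ((('C(n, n1))%:R)^-1 * \prod_(i < n) pmiss p11 p10 p01 p00 (mm i))
       * (E z mm)%:R.

End Defs.

(* Main.v *)
Require Import Defs.
From HB Require Import structures.
From mathcomp Require Import all_boot all_order all_algebra.
From mathcomp Require Import reals.
From mathcomp Require Import zify.
Import Order.TTheory GRing.Theory Num.Theory.
Local Open Scope ring_scope.

Set Implicit Arguments. Unset Strict Implicit. Unset Printing Implicit Defensive.


Lemma core (R : realType) (T : finType) (A : {set T}) (t : T -> R) (al : R) :
  0 <= al ->
  (#|[set a in A | (#|[set b in A | t a <= t b]|%:R / #|A|%:R <= al)]|)%:R <= al * #|A|%:R.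
Proof.
move=> al0. set B := [set a in A | _].
have [->|/set0Pn [a0 Ba0]] := eqVneq B set0; first by rewrite cards0 mulr_ge0.
case: (arg_minP t Ba0) => a Ba amin.
have Ba' : a \in B := Ba.
move: (Ba'); rewrite /B inE => /andP [Aa H].
have A0 : (0 < #|A|)%N by rewrite card_gt0; apply/set0Pn; exists a.
have sub: B \subset [set b in A | t a <= t b].
  apply/subsetP => b Bb; rewrite inE (amin b Bb) andbT.
  by move: Bb; rewrite /B inE => /andP[].
apply: le_trans (_ : #|[set b in A | t a <= t b]|%:R <= _).
  by rewrite ler_nat subset_leq_card.
by rewrite -ler_pdivrMr ?ltr0n.
Qed.


Lemma sum_bool_card (T : finType) (A : {pred T}) (b : T -> bool) :
  (\sum_(j in A) (b j : nat) = #|[set j in A | b j]|)%N.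
Proof.
rewrite -sum1_card big_mkcond [RHS]big_mkcond /=; apply: eq_bigr => j _.
by rewrite inE; case: (j \in A); case: (b j).
Qed.

Section Rank.
Variables (R : realType) (n : nat) (S : {set 'I_n}).

Definition Iv : {set 'I_n.+1} := [set x : 'I_n.+1 | (0 < x)%N && (x <= #|S|)%N].

Lemma cardS_le : (#|S| <= n)%N.
Proof. by rewrite -[X in (_ <= X)%N](card_ord n) max_card. Qed.

Lemma card_Iv : (#|Iv| <= #|S|)%N.
Proof.
have -> : #|S| = #|'I_#|S| | by rewrite card_ord.
apply: leq_trans (leq_imset_card (fun k : 'I_#|S| => (inord k.+1 : 'I_n.+1)) 'I_#|S|).
apply: subset_leq_card; apply/subsetP => x; rewrite inE => /andP [x0 xS].
have xS' : (x.-1 < #|S|)%N by rewrite prednK.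
apply/imsetP; exists (Ordinal xS') => //=; apply: val_inj => /=.
by rewrite prednK // inordK // ltn_ord.
Qed.

Section Y.
Variable (y : 'I_n -> R).

Definition ley (j i : 'I_n) := (y j < y i) || ((y j == y i) && (j <= i)%N).

Lemma ley_refl i : ley i i.
Proof. by rewrite /ley ltxx eqxx leqnn. Qed.

Lemma ley_total i j : ley j i || ley i j.
Proof.
rewrite /ley; case: (ltgtP (y j) (y i)) => //= h.
by rewrite leq_total.
Qed.

Lemma ley_anti i j : ley j i -> ley i j -> i = j.
Proof.
rewrite /ley; case: (ltgtP (y j) (y i)) => //= h.
move=> h1 h2; apply: val_inj; apply/eqP; by rewrite eqn_leq h1 h2.
Qed.

Lemma ley_trans k j i : ley k j -> ley j i -> ley k i.
Proof.
rewrite /ley => /orP[h1|/andP[/eqP h1 h1']] /orP[h2|/andP[/eqP h2 h2']].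
- by rewrite (lt_trans h1 h2).
- by rewrite -h2 h1.
- by rewrite h1 h2.
- by rewrite h1 h2 eqxx (leq_trans h1' h2') orbT.
Qed.

Lemma psiE i j : psi i j (y i) (y j) = ley j i :> nat.
Proof.
rewrite /psi /ley; case: (ltgtP (y j) (y i)) => h //=.
Qed.

Definition rk i := (\sum_(j in S) psi i j (y i) (y j))%N.

Lemma rkE i : rk i = #|[set j in S | ley j i]|.
Proof.
rewrite /rk; under eq_bigr do rewrite psiE.
exact: sum_bool_card.
Qed.

Lemma rk_le i j : i \in S -> j \in S -> (rk j <= rk i)%N = ley j i.
Proof.
move=> Si Sj; rewrite !rkE; case h: (ley j i).
  apply: subset_leq_card; apply/subsetP => k; rewrite !inE => /andP[-> hk].
  exact: ley_trans hk h.
apply/negbTE; rewrite -ltnNge; apply: proper_card; apply/properP; split.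
  apply/subsetP => k; rewrite !inE => /andP[-> hk] /=.
  have := ley_total i j; rewrite h /= => hij; exact: ley_trans hk hij.
exists j; rewrite !inE Sj /=; [exact: ley_refl | by rewrite h].
Qed.

Lemma rk_inj : {in S &, injective rk}.
Proof.
move=> i j Si Sj e; have := rk_le Si Sj; have := rk_le Sj Si.
by rewrite e leqnn => h1 h2; apply: ley_anti; rewrite -?h1 -?h2.
Qed.

Lemma rk_bounds i : i \in S -> (0 < rk i)%N && (rk i <= #|S|)%N.
Proof.
move=> Si; rewrite rkE; apply/andP; split.
  by rewrite card_gt0; apply/set0Pn; exists i; rewrite inE Si ley_refl.
by apply: subset_leq_card; apply/subsetP => k; rewrite inE => /andP[].
Qed.

Definition ir i : 'I_n.+1 := inord (rk i).

Lemma irK i : i \in S -> (ir i : nat) = rk i.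
Proof.
move=> Si; rewrite inordK // ltnS; case/andP: (rk_bounds Si) => _ h.
exact: leq_trans h cardS_le.
Qed.

Lemma ir_inj : {in S &, injective ir}.
Proof.
move=> i j Si Sj e; apply: rk_inj => //; by rewrite -irK // e irK.
Qed.

Lemma Iv_im : ir @: S = Iv.
Proof.
apply/eqP; rewrite eqEcard; apply/andP; split.
  apply/subsetP => x /imsetP [i Si ->]; rewrite inE irK //; exact: rk_bounds.
by rewrite card_in_imset; [exact: card_Iv | exact: ir_inj].
Qed.


Definition fa (a : assignment n) : {set 'I_n.+1} := ir @: [set i in S | a i].

Lemma mem_fa a i : i \in S -> (ir i \in fa a) = a i.
Proof.
move=> Si; apply/imsetP/idP => [[i' Hi' e]|ai].
  move: Hi'; rewrite inE => /andP [Si' ai'].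
  by rewrite (ir_inj Si Si' e).
by exists i; rewrite // inE Si ai.
Qed.

Lemma assignS_sub m a i : a \in assignS S m -> a i -> i \in S.
Proof. by rewrite inE => /andP [/forallP /(_ i) /implyP h _]. Qed.

Lemma assignS_card m a : a \in assignS S m -> #|[set i in S | a i]| = m.
Proof.
move=> Ha; move: (Ha); rewrite inE => /andP [_ /eqP <-]; rewrite /ntreated.
apply: eq_card => i; rewrite !inE; case ai: (a i); rewrite ?andbF ?andbT //.
exact: assignS_sub Ha ai.
Qed.

Definition Fam m := [set X : {set 'I_n.+1} | (X \subset Iv) && (#|X| == m)].

Lemma card_fa a : #|fa a| = #|[set i in S | a i]|.
Proof.
rewrite card_in_imset //; move=> i j; rewrite !inE => /andP [Si _] /andP [Sj _].
exact: ir_inj.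
Qed.

Lemma fa_in a m : a \in assignS S m -> fa a \in Fam m.
Proof.
move=> Ha; rewrite inE card_fa (assignS_card Ha) eqxx andbT -Iv_im.
by apply: imsetS; apply/subsetP => i; rewrite inE => /andP[].
Qed.

Lemma fa_inj m : {in assignS S m &, injective fa}.
Proof.
move=> a a' Ha Ha' e; apply/ffunP => i; case Si: (i \in S).
  by rewrite -!mem_fa // e.
case ai: (a i); first by move: (assignS_sub Ha ai); rewrite Si.
case ai': (a' i); first by move: (assignS_sub Ha' ai'); rewrite Si.
by [].
Qed.

Lemma fa_onto m X : X \in Fam m -> exists2 a, a \in assignS S m & fa a = X.
Proof.
rewrite inE => /andP [XI /eqP cX].
pose a : assignment n := [ffun i => (i \in S) && (ir i \in X)].
have faX : fa a = X.
  apply/setP => x; apply/idP/idP.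
    case/imsetP => i; rewrite inE ffunE => /andP [_ /andP [_ h]] ->; exact: h.
  move=> xX; move: (subsetP XI x xX); rewrite -Iv_im => /imsetP [i Si ex].
  by apply/imsetP; exists i => //; rewrite inE ffunE Si -ex xX.
exists a => //; rewrite inE; apply/andP; split.
  by apply/forallP => i; rewrite ffunE; apply/implyP => /andP [].
rewrite /ntreated -cX -faX card_fa; apply/eqP; apply: eq_card => i.
by rewrite !inE ffunE; case: (i \in S).
Qed.

Lemma count_inv m (P : pred {set 'I_n.+1}) :
  #|[set a in assignS S m | P (fa a)]| = #|[set X in Fam m | P X]|.
Proof.
rewrite -(@card_in_imset _ _ fa); last first.
  by move=> a a' /setIdP [Ha _] /setIdP [Ha' _]; exact: fa_inj Ha Ha'.
apply: eq_card => X; apply/imsetP/setIdP.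
  by case=> a /setIdP [Ha Pa] ->; split; [exact: fa_in | exact: Pa].
by case => /fa_onto [a Ha <-] Pa; exists a => //; apply/setIdP.
Qed.

Definition Tst (k : stat_kind) (phi : nat -> R) (X : {set 'I_n.+1}) : R :=
  \sum_(x in X) phi (match k with RankSum => (x : nat)
     | ControlRank => #|[set x' in Iv | (x' \notin X) && (x' <= x)%N]| end).

Lemma tRS_T k phi m a : a \in assignS S m -> tRS k phi S a y = Tst k phi (fa a).
Proof.
move=> Ha; rewrite /Tst /fa big_imset; last first.
  by move=> i j; rewrite !inE => /andP [Si _] /andP [Sj _]; exact: ir_inj.
rewrite /tRS; apply: eq_big => [i|i]; first by rewrite inE.
move=> /andP [Si ai]; congr phi; case: k.
  by rewrite irK.
rewrite (_ : (\sum_(j in S) _)%N = #|[set j in S | ~~ a j && (rk j <= rk i)%N]|);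
  last first.
  rewrite -sum_bool_card; apply: eq_bigr => j Sj.
  by rewrite psiE rk_le //; case: (a j); case: (ley j i).
rewrite -(@card_in_imset _ _ ir); last first.
  by move=> u v; rewrite !inE => /andP [Su _] /andP [Sv _]; exact: ir_inj.
apply: eq_card => x; apply/imsetP/setIdP.
  case=> j; rewrite inE => /andP [Sj /andP [aj le]] ->.
  by rewrite -Iv_im imset_f //= mem_fa // aj /= !irK.
case; rewrite -Iv_im => /imsetP [j Sj ej] /andP [nx lex].
exists j => //; rewrite inE Sj /=; move: nx lex; rewrite ej mem_fa // !irK //.
by move=> -> .
Qed.

End Y.

Lemma GRS_inv k phi m (y y' : 'I_n -> R) c :
  GRS k phi S m y c = GRS k phi S m y' c.
Proof.
rewrite /GRS; congr (_%:R / _).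
have h : forall y : 'I_n -> R, #|[set a in assignS S m | c <= tRS k phi S a y]| =
   #|[set X in Fam m | c <= Tst k phi X]|.
  move=> z; rewrite -(count_inv z); apply: eq_card => a.
  by apply/setIdP/setIdP => -[Ha h]; split => //; rewrite ?(tRS_T z k phi Ha) // -(tRS_T z k phi Ha).
by rewrite !h.
Qed.

End Rank.


Lemma split_card (T : finType) (s b : pred T) :
  (#|[set i | s i && b i]| + #|[set i | s i && ~~ b i]| = #|[set i | s i]|)%N.
Proof.
rewrite -(cardID [set i | b i] [set i | s i]); congr addn; apply: eq_card => i;
  by rewrite !inE // andbC.
Qed.

Section Fib.
Variables (R : realType) (n : nat).

Definition proj (S : {set 'I_n}) (z : assignment n) : assignment n :=
  [ffun i => z i && (i \in S)].
Definition Zs (n1 : nat) (S : {set 'I_n}) (m : nat) : {set assignment n} :=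
  [set z | (ntreated z == n1) && (#|[set i in S | z i]| == m)].

Lemma tRS_proj k (phi : nat -> R) S z y : tRS k phi S (proj S z) y = tRS k phi S z y.
Proof.
rewrite /tRS; apply: eq_big => [i|i]; rewrite ?ffunE.
  by case: (i \in S); rewrite ?andbT ?andbF.
move=> /andP [Si _]; case: k => //; congr phi; apply: eq_bigr => j Sj.
by rewrite ffunE Sj andbT.
Qed.

Lemma nt_split (S : {set 'I_n}) (w : assignment n) :
  ntreated w = (#|[set i in S | w i]| + #|[set i | (i \notin S) && w i]|)%N.
Proof.
rewrite /ntreated -(split_card (fun i => w i) (fun i => i \in S)).
by congr addn; apply: eq_card => i; rewrite !inE // andbC.
Qed.

Lemma proj_in n1 S m z : z \in Zs n1 S m -> proj S z \in assignS S m.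
Proof.
rewrite inE => /andP [_ /eqP <-]; rewrite inE; apply/andP; split.
  by apply/forallP => i; rewrite ffunE; apply/implyP => /andP [].
by apply/eqP; apply: eq_card => i; rewrite !inE ffunE andbC.
Qed.

Definition swap (S : {set 'I_n}) (a' z : assignment n) : assignment n :=
  [ffun i => if i \in S then a' i else z i].

Lemma swap_in n1 S m a' z : z \in Zs n1 S m -> a' \in assignS S m ->
  swap S a' z \in Zs n1 S m /\ proj S (swap S a' z) = a'.
Proof.
move=> Hz Ha; split; last first.
  apply/ffunP => i; rewrite !ffunE; case Si: (i \in S); rewrite ?andbT //.
  rewrite andbF; case ai: (a' i) => //; by move: (assignS_sub Ha ai); rewrite Si.
have cS : #|[set i in S | swap S a' z i]| = m.
  rewrite -(assignS_card Ha); apply: eq_card => i; rewrite !inE ffunE.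
  by case: (i \in S).
move: Hz; rewrite !inE cS eqxx andbT => /andP [/eqP <- /eqP cz].
rewrite (nt_split S) (nt_split S z) cS cz; apply/eqP; congr addn.
by apply: eq_card => i; rewrite !inE ffunE; case: (i \in S).
Qed.

Definition fib n1 S m (a : assignment n) := [set z in Zs n1 S m | proj S z == a].

Lemma fib_le n1 S m a a' : a \in assignS S m -> a' \in assignS S m ->
  (#|fib n1 S m a| <= #|fib n1 S m a'|)%N.
Proof.
move=> Ha Ha'.
rewrite -(@card_in_imset _ _ (swap S a')); last first.
  move=> z1 z2 /setIdP [H1 /eqP p1] /setIdP [H2 /eqP p2] e.
  apply/ffunP => i; have := congr1 (fun f : assignment n => f i) e.
  rewrite !ffunE; case Si: (i \in S) => // _.
  have := congr1 (fun f : assignment n => f i) p1.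
  have := congr1 (fun f : assignment n => f i) p2.
  by rewrite !ffunE Si !andbT => -> ->.
apply: subset_leq_card; apply/subsetP => w /imsetP [z /setIdP [Hz _] ->].
by case: (swap_in Hz Ha') => H1 H2; apply/setIdP; split => //; apply/eqP.
Qed.

Lemma transfer n1 S m : exists K, forall Q : pred (assignment n),
  #|[set z in Zs n1 S m | Q (proj S z)]| = (K * #|[set a in assignS S m | Q a]|)%N.
Proof.
have [A0|[a0 Ha0]] : assignS S m = set0 \/ exists a0, a0 \in assignS S m.
  case: (set_0Vmem (assignS S m)) => [->|[a0 h]]; [by left | by right; exists a0].
  exists 0%N => Q; rewrite mul0n; apply/eqP; rewrite cards_eq0; apply/eqP.
  apply/setP => z; rewrite inE [RHS]inE; apply/negbTE; apply/negP => /andP [Hz _].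
  by move: (proj_in Hz); rewrite A0 inE.
exists #|fib n1 S m a0| => Q.
rewrite -sum1_card (partition_big (proj S) (mem (assignS S m))); last first.
  by move=> z /setIdP [Hz _]; exact: proj_in Hz.
rewrite /= -[X in (_ * X)%N]sum1_card big_distrr /= big_mkcond [RHS]big_mkcond /=.
apply: eq_bigr => a _.
case Ha: (a \in assignS S m); last first.
  by rewrite (_ : a \in [set a1 in assignS S m | Q a1] = false) //; apply/setIdP => -[]; rewrite Ha.
rewrite (_ : a \in [set a1 in assignS S m | Q a1] = Q a); last first.
  by apply/setIdP/idP => [[]|] //; rewrite Ha.
rewrite sum1dep_card muln1; case Qa: (Q a).
  have -> : #|fib n1 S m a0| = #|fib n1 S m a| by apply/eqP; rewrite eqn_leq !fib_le.
  apply: eq_card => z; rewrite !inE; case: (proj S z =P a) => [->|]; by rewrite ?Qa ?andbT ?andbF.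
apply/eqP; rewrite cards_eq0; apply/eqP; apply/setP => z; rewrite !inE.
by case: (proj S z =P a) => [->|]; rewrite ?Qa ?andbF.
Qed.

End Fib.


Lemma count_main (R : realType) (n n1 : nat) (S : {set 'I_n}) m k (phi : nat -> R)
  (y0 Y0 : 'I_n -> R) (al : R) : 0 <= al ->
  (#|[set z in Zs n1 S m | GRS k phi S m y0 (tRS k phi S z Y0) <= al]|)%:R
    <= al * (#|Zs n1 S m|)%:R.
Proof.
move=> al0; have [K HK] := transfer n1 S m.
have -> : #|[set z in Zs n1 S m | GRS k phi S m y0 (tRS k phi S z Y0) <= al]| =
  #|[set z in Zs n1 S m | (fun a => GRS k phi S m Y0 (tRS k phi S a Y0) <= al) (proj S z)]|.
  apply: eq_card => z; rewrite !inE /= tRS_proj (GRS_inv S k phi m y0 Y0) //.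
rewrite (HK (fun a => GRS k phi S m Y0 (tRS k phi S a Y0) <= al)).
have -> : #|Zs n1 S m| = #|[set z in Zs n1 S m | predT (proj S z)]|.
  by apply: eq_card => z; rewrite !inE andbT.
rewrite (HK predT) !natrM mulrCA ler_wpM2l // ?ler0n //.
have -> : #|[set a in assignS S m | predT a]| = #|assignS S m|.
  by apply: eq_card => z; rewrite !inE andbT.
exact: (@core R _ (assignS S m) (fun a => tRS k phi S a Y0) al al0).
Qed.


Section W.
Variables (R : realType) (n : nat) (p11 p10 p01 p00 : R).

Definition W (mm : misspairs n) : R := \prod_(i < n) pmiss p11 p10 p01 p00 (mm i).
Definition hh (b s : bool) : R :=
  \sum_(x : bool * bool) pmiss p11 p10 p01 p00 x * ((if b then x.1 else x.2) == s)%:R.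
Definition g (z : assignment n) (S : {set 'I_n}) : R :=
  \sum_(mm : misspairs n) W mm * (obsS z mm == S)%:R.

Lemma gE z S : g z S = \prod_(i < n) hh (z i) (i \in S).
Proof.
rewrite /hh bigA_distr_bigA /g; apply: eq_bigr => mm _.
rewrite big_split /= /W; congr (_ * _).
case: (eqVneq (obsS z mm) S) => [<-|ne].
  by rewrite big1 // => i _; rewrite inE eqxx.
have: ~~ [forall i, (i \in obsS z mm) == (i \in S)].
  by apply: contra ne => /forallP h; apply/eqP/setP => i; apply/eqP/h.
rewrite negb_forall => /existsP [i hi].
by rewrite (bigD1 i) //=; move: hi; rewrite inE => /negbTE ->; rewrite mul0r.
Qed.

Hypotheses (h11 : 0 <= p11) (h10 : 0 <= p10) (h01 : 0 <= p01) (h00 : 0 <= p00).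

Lemma pmiss_ge0 x : 0 <= pmiss p11 p10 p01 p00 x.
Proof. by case: x => [[] []]. Qed.

Lemma g_ge0 z S : 0 <= g z S.
Proof.
apply: sumr_ge0 => mm _; apply: mulr_ge0; last exact: ler0n.
by apply: prodr_ge0 => i _; exact: pmiss_ge0.
Qed.

Hypothesis hsum : p11 + p10 + p01 + p00 = 1.

Lemma sum_g z : \sum_(S : {set 'I_n}) g z S = 1.
Proof.
rewrite /g exchange_big /=.
have -> : \sum_(mm : misspairs n) \sum_(S : {set 'I_n}) W mm * (obsS z mm == S)%:R
    = \sum_(mm : misspairs n) W mm.
  apply: eq_bigr => mm _; rewrite (bigD1 (obsS z mm)) //= eqxx mulr1 big1 ?addr0 //.
  by move=> S; rewrite eq_sym => /negbTE ->; rewrite mulr0.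
have -> : \sum_(mm : misspairs n) W mm
    = \prod_(i < n) \sum_(x : bool * bool) pmiss p11 p10 p01 p00 x.
  by rewrite bigA_distr_bigA.
have -> : \sum_(x : bool * bool) pmiss p11 p10 p01 p00 x = 1.
  have -> : \sum_(x : bool * bool) pmiss p11 p10 p01 p00 x =
      \sum_(a : bool) \sum_(b : bool) pmiss p11 p10 p01 p00 (a, b).
    by rewrite pair_big; apply: eq_big => [[a b]|[a b]].
  by rewrite !big_bool /= addrA.
by rewrite big1.
Qed.

End W.

Lemma prod4 (R : realType) (n : nat) (f : bool -> bool -> R) (b s : 'I_n -> bool) :
  \prod_(i < n) f (b i) (s i) =
  f true true ^+ #|[set i | s i && b i]| * f false true ^+ #|[set i | s i && ~~ b i]| *
  (f true false ^+ #|[set i | ~~ s i && b i]| * f false false ^+ #|[set i | ~~ s i && ~~ b i]|).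
Proof.
have pc : forall (P : pred 'I_n) (c : R), \prod_(i | P i) c = c ^+ #|[set i | P i]|.
  by move=> P c; rewrite -prodr_const; apply: eq_bigl => i; rewrite inE.
rewrite (bigID s) /= (bigID b) /= [X in _ * X](bigID b) /=.
rewrite (eq_bigr (fun _ => f true true)); last by move=> i /andP [-> ->].
rewrite pc (eq_bigr (fun _ => f false true)); last by move=> i /andP [-> /negbTE ->].
rewrite pc (eq_bigr (fun _ => f true false)); last by move=> i /andP [/negbTE -> ->].
rewrite pc (eq_bigr (fun _ => f false false)); last by move=> i /andP [/negbTE -> /negbTE ->].
by rewrite pc.
Qed.

Lemma g_const (R : realType) (n : nat) (p11 p10 p01 p00 : R) n1 (S : {set 'I_n}) m (z z' : assignment n) :
  z \in Zs n1 S m -> z' \in Zs n1 S m ->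
  g p11 p10 p01 p00 z S = g p11 p10 p01 p00 z' S.
Proof.
move=> Hz Hz'; move: (Hz) (Hz'); rewrite !inE => /andP [/eqP t1 /eqP s1] /andP [/eqP t2 /eqP s2].
have e2 := split_card (fun i => i \in S) z; have e2' := split_card (fun i => i \in S) z'.
have e3 := nt_split S z; have e3' := nt_split S z'.
have e4 := split_card (fun i => i \notin S) z; have e4' := split_card (fun i => i \notin S) z'.
rewrite !gE !(prod4 (hh p11 p10 p01 p00) (fun i => z i) (fun i => i \in S)).
rewrite !(prod4 (hh p11 p10 p01 p00) (fun i => z' i) (fun i => i \in S)).
simpl in *.
have g1 : #|[set i in S | z i]| = #|[set i in S | z' i]| by rewrite s1 s2.
have g2 : #|[set i in S | ~~ z i]| = #|[set i in S | ~~ z' i]|.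
  by apply: (@addnI m); rewrite -{1}s1 e2 -s2 e2'.
have g3 : #|[set i | i \notin S & z i]| = #|[set i | i \notin S & z' i]|.
  by apply: (@addnI m); rewrite -{1}s1 -e3 t1 -s2 -e3' t2.
have g4 : #|[set i | i \notin S & ~~ z i]| = #|[set i | i \notin S & ~~ z' i]|.
  by apply: (@addnI #|[set i | i \notin S & z i]|); rewrite e4 g3 e4'.
by rewrite g1 g2 g3 g4.
Qed.


Lemma tRS_ext (R : realType) (n : nat) k (phi : nat -> R) (S : {set 'I_n}) z
  (y y' : 'I_n -> R) : (forall i, y i = y' i) -> tRS k phi S z y = tRS k phi S z y'.
Proof.
move=> e; rewrite /tRS; apply: eq_bigr => i _; congr phi.
by case: k; apply: eq_bigr => j _; rewrite !e.
Qed.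

Lemma card_nt (n n1 : nat) : #|[set z : assignment n | ntreated z == n1]| = 'C(n, n1).
Proof.
rewrite -[n in 'C(n, _)]card_ord -card_draws.
have inj : injective (fun z : assignment n => [set i | z i]).
  move=> z1 z2 e; apply/ffunP => i.
  by have := congr1 (fun A : {set 'I_n} => i \in A) e; rewrite /= !inE.
rewrite -(card_imset _ inj); apply: eq_card => A; apply/imsetP/idP.
  by case=> z; rewrite !inE => Hz ->.
rewrite inE => HA; exists [ffun i => i \in A].
  by rewrite inE /ntreated; rewrite (_ : [set i | [ffun i => i \in A] i] = A) //;
    apply/setP => i; rewrite inE ffunE.
by apply/setP => i; rewrite inE ffunE.
Qed.

Unset Implicit Arguments.

Theorem theorem5 (R : realType) (n n1 n0 : nat)
  (Y1 Y0 : 'I_n -> R) (p11 p10 p01 p00 : R)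
  (k : stat_kind) (phi : nat -> R) (delta y0 : 'I_n -> R) :
  (0 < n1)%N -> (0 < n0)%N -> (n1 + n0)%N = n ->
  0 <= p11 -> 0 <= p10 -> 0 <= p01 -> 0 <= p00 ->
  p11 + p10 + p01 + p00 = 1 ->
  {homo phi : a b / (a <= b)%N >-> a <= b} ->
  (* H_delta : tau = delta *)
  (forall i, Y1 i - Y0 i = delta i) ->
  forall alpha : R, 0 < alpha -> alpha < 1 ->
  Pr n1 p11 p10 p01 p00
     (fun z mm => pval k phi Y1 Y0 delta y0 z mm <= alpha) <= alpha.
Proof.
move=> _ _ hn h11 h10 h01 h00 hs _ hnull al al0 _.
have al0' : 0 <= al by exact: ltW.
pose f (z : assignment n) (S : {set 'I_n}) :=
  GRS k phi S #|[set i in S | z i]| y0 (tRS k phi S z Y0).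
have E1 : forall z mm, pval k phi Y1 Y0 delta y0 z mm = f z (obsS z mm).
  move=> z mm; rewrite /pval /f /=; congr GRS; apply: tRS_ext => i.
  rewrite /Yreal -hnull; case: (z i) => /=.
    by rewrite mulr1 opprB addrC subrK.
  by rewrite mulr0 subr0.
set Cinv := ('C(n, n1)%:R : R)^-1.
have step : forall z : assignment n,
  \sum_(mm : misspairs n) (Cinv * \prod_(i < n) pmiss p11 p10 p01 p00 (mm i)) *
     ((pval k phi Y1 Y0 delta y0 z mm <= al)%R)%:R =
  Cinv * \sum_(S : {set 'I_n}) g p11 p10 p01 p00 z S * ((f z S <= al)%R)%:R.
  move=> z; under eq_bigr do rewrite E1 -mulrA.
  rewrite -mulr_sumr; congr (_ * _).
  rewrite /g; under [RHS]eq_bigr do rewrite mulr_suml.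
  rewrite exchange_big /=; apply: eq_bigr => mm _.
  rewrite (bigD1 (obsS z mm)) //= eqxx mulr1 [X in _ = _ + X]big1 ?addr0 //.
  move=> S; by rewrite eq_sym => /negbTE ->; rewrite mulr0 mul0r.
rewrite /Pr (eq_bigr _ (fun z _ => step z)) -mulr_sumr exchange_big /=.
have stepC : forall S : {set 'I_n},
  \sum_(z : assignment n | ntreated z == n1) g p11 p10 p01 p00 z S * ((f z S <= al)%R)%:R
  <= al * \sum_(z : assignment n | ntreated z == n1) g p11 p10 p01 p00 z S.
  move=> S.
  pose p := fun z : assignment n => (inord #|[set i in S | z i]| : 'I_n.+1).
  rewrite (partition_big p predT) //.
  rewrite [X in _ <= al * X](partition_big p predT) //.
  rewrite mulr_sumr; apply: ler_sum => m _.
  have eqZ : forall z, ((ntreated z == n1) && (p z == m)) = (z \in Zs n1 S m).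
    move=> z; rewrite inE; congr andb.
    have lt : (#|[set i in S | z i]| < n.+1)%N.
      by rewrite ltnS -[X in (_ <= X)%N](card_ord n) max_card.
    by apply/eqP/eqP => [<-|e]; [rewrite /p inordK | apply: val_inj; rewrite /p /= inordK].
  rewrite !(eq_bigl _ _ eqZ).
  case: (set_0Vmem (Zs n1 S m)) => [Z0 | [z0 Hz0]].
    by rewrite !big1 ?mulr0 // => z; rewrite Z0 inE.
  rewrite (eq_bigr (fun z => g p11 p10 p01 p00 z0 S *
      ((GRS k phi S m y0 (tRS k phi S z Y0) <= al)%R)%:R)); last first.
    move=> z Hz; rewrite (g_const _ _ _ _ Hz Hz0) /f.
    by move: Hz; rewrite inE => /andP [_ /eqP ->].
  rewrite [X in _ <= _ * X](eq_bigr (fun _ => g p11 p10 p01 p00 z0 S)); last first.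
    by move=> z Hz; rewrite (g_const _ _ _ _ Hz Hz0).
  rewrite -mulr_sumr sumr_const -natr_sum sum_bool_card.
  rewrite -[g p11 p10 p01 p00 z0 S *+ _]mulr_natr mulrCA.
  rewrite ler_wpM2l ?g_ge0 //; exact: count_main.
apply: le_trans (_ : Cinv * \sum_(S : {set 'I_n}) al *
   \sum_(z : assignment n | ntreated z == n1) g p11 p10 p01 p00 z S <= _).
  rewrite ler_wpM2l ?invr_ge0 ?ler0n //; apply: ler_sum => S _; exact: stepC.
rewrite -mulr_sumr exchange_big /=.
under eq_bigr do rewrite sum_g //.
have Cn : ('C(n, n1)%:R : R) != 0 by rewrite pnatr_eq0 -lt0n bin_gt0 -hn leq_addr.
rewrite -[1 : R]/(1%:R) -natr_sum sum1dep_card card_nt mulrCA /Cinv mulVf //.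
by rewrite mulr1.
Qed.
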